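(* Let $m=1$, $r\in(0,1]$ (publicly known), $\rho\in(0,1)$, and set $\alpha=\frac{\rho}{1-r\rho}$. Consider the direct mechanism that, on reports $b=(b_1,\dots,b_n)\in\mathbb{R}^n_{>0}$, allocates $x_i(b)=\frac{b_i^\alpha}{\sum_{k\in N}b_k^\alpha}$ to each agent $i$ and charges \[ p_i(b)=r\alpha\Big(\sum_{k\ne i}b_k^\alpha\Big)\int_0^{b_i}\frac{t^{r\alpha}}{\big(t^\alpha+\sum_{k\ne i}b_k^\alpha\big)^{r+1}}\,dt . \] Then (a) for any reports $b$, the allocation $x(b)$ lies in $\Psi(\rho)$ for the valuations $v_i(x)=b_i x^r$; and (b) the mechanism is truthful: for every agent $i$, every true weight $w_i>0$ and every $b_{-i}\in\mathbb{R}^{n-1}_{>0}$, the report $b_i=w_i$ maximizes $w_i\,x_i(b_{-i},b_i)^r-p_i(b_{-i},b_i)$ over all $b_i>0$ (indeed it is the unique maximizer).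
   Context: Single divisible good of supply 1; agent $i$'s true valuation is $v_i(x)=w_i x^r$ with $w_i>0$ (every differentiable, concave, monotone, homogeneous-of-degree-$r$ valuation of one good has this form). Utilities are quasilinear: value minus payment. $\Psi(\rho)$ is the set of allocations $(x_1,\dots,x_n)\ge 0$, $\sum_i x_i\le 1$, maximizing $(\sum_i v_i(x_i)^\rho)^{1/\rho}$. $(b_{-i},b_i')$ denotes the report vector with $i$th entry replaced by $b_i'$. *)

(* Defs.v *)
From Stdlib Require Import Reals Lra Lia.
From Coquelicot Require Import Coquelicot.
Open Scope R_scope.

(* Real power x^y for x >= 0 (with 0^y = 0); it is only ever applied to
   nonnegative bases and positive exponents here. *)
Definition rpow (x y : R) : R := if Rlt_dec 0 x then Rpower x y else 0.

(* sumR n f = f 0 + ... + f (n-1); agents are indexed 0, ..., n-1. *)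
Fixpoint sumR (n : nat) (f : nat -> R) : R :=
  match n with
  | O => 0
  | S k => sumR k f + f k
  end.

Definition feasible (n : nat) (x : nat -> R) : Prop :=
  (forall i, (i < n)%nat -> 0 <= x i) /\ sumR n x <= 1.

Definition rho_welfare (n : nat) (v : nat -> R -> R) (rho : R) (x : nat -> R) : R :=
  rpow (sumR n (fun i => rpow (v i (x i)) rho)) (1 / rho).

Definition in_Psi (n : nat) (v : nat -> R -> R) (rho : R) (x : nat -> R) : Prop :=
  feasible n x /\
  forall y, feasible n y -> rho_welfare n v rho y <= rho_welfare n v rho x.

Definition upd (b : nat -> R) (i : nat) (bi : R) : nat -> R :=
  fun k => if Nat.eqb k i then bi else b k.

Definition alloc (n : nat) (alpha : R) (b : nat -> R) (i : nat) : R :=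
  rpow (b i) alpha / sumR n (fun k => rpow (b k) alpha).

Definition others (n : nat) (alpha : R) (b : nat -> R) (i : nat) : R :=
  sumR n (fun k => if Nat.eqb k i then 0 else rpow (b k) alpha).

Definition pay (n : nat) (r alpha : R) (b : nat -> R) (i : nat) : R :=
  r * alpha * others n alpha b i *
  RInt (fun t => rpow t (r * alpha) / rpow (rpow t alpha + others n alpha b i) (r + 1))
       0 (b i).

Definition utility (n : nat) (r alpha w : R) (b : nat -> R) (i : nat) : R :=
  w * rpow (alloc n alpha b i) r - pay n r alpha b i.

(* Main.v *)
Require Import Defs.
From Stdlib Require Import Reals Lra Lia.
From Coquelicot Require Import Coquelicot.
Open Scope R_scope.

Lemma rpow_pos x y : 0 < x -> rpow x y = exp (y * ln x).
Proof. intros H; unfold rpow; destruct (Rlt_dec 0 x); [reflexivity|lra]. Qed.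

Lemma rpow_nonpos x y : x <= 0 -> rpow x y = 0.
Proof. intros H; unfold rpow; destruct (Rlt_dec 0 x); [lra|reflexivity]. Qed.

Lemma rpow_ge0 x y : 0 <= rpow x y.
Proof. unfold rpow; destruct (Rlt_dec 0 x); [unfold Rpower; left; apply exp_pos|lra]. Qed.

Lemma rpow_gt0 x y : 0 < x -> 0 < rpow x y.
Proof. intros H; rewrite rpow_pos by exact H; apply exp_pos. Qed.

Lemma rpow_le a c y : 0 < y -> a <= c -> rpow a y <= rpow c y.
Proof.
  intros Hy Hac. destruct (Rle_lt_dec a 0) as [Ha|Ha].
  - rewrite (rpow_nonpos a) by exact Ha. apply rpow_ge0.
  - rewrite !rpow_pos by lra. destruct (Req_dec a c) as [->|Hne]; [lra|].
    left; apply exp_increasing. apply Rmult_lt_compat_l; [lra|].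
    apply ln_increasing; lra.
Qed.

Lemma sumR_le n f g : (forall k, (k < n)%nat -> f k <= g k) -> sumR n f <= sumR n g.
Proof.
  induction n; simpl; intros H; [lra|].
  assert (sumR n f <= sumR n g) by (apply IHn; intros; apply H; lia).
  assert (f n <= g n) by (apply H; lia). lra.
Qed.

Lemma sumR_ext n f g : (forall k, (k < n)%nat -> f k = g k) -> sumR n f = sumR n g.
Proof.
  induction n; simpl; intros H; [lra|].
  rewrite IHn by (intros; apply H; lia). rewrite H by lia. reflexivity.
Qed.

Lemma sumR_lin n a c f g :
  sumR n (fun k => a * f k + c * g k) = a * sumR n f + c * sumR n g.
Proof. induction n; simpl; [ring|]. rewrite IHn; ring. Qed.

Lemma sumR_div n f c : sumR n (fun k => f k / c) = sumR n f / c.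
Proof. induction n; simpl; [unfold Rdiv; ring|]. rewrite IHn; unfold Rdiv; ring. Qed.

Lemma sumR_ge0 n f : (forall k, (k < n)%nat -> 0 <= f k) -> 0 <= sumR n f.
Proof.
  intros H. replace 0 with (sumR n (fun _ => 0)).
  - apply sumR_le; exact H.
  - clear H; induction n; simpl; [reflexivity|rewrite IHn; ring].
Qed.

Lemma sumR_ge_term n f j : (forall k, (k < n)%nat -> 0 <= f k) -> (j < n)%nat ->
  f j <= sumR n f.
Proof.
  induction n; intros H Hj; [lia|]. simpl.
  assert (0 <= sumR n f) by (apply sumR_ge0; intros; apply H; lia).
  destruct (Nat.eq_dec j n) as [->|Hne]; [lra|].
  assert (f j <= sumR n f) by (apply IHn; [intros; apply H; lia|lia]).
  assert (0 <= f n) by (apply H; lia). lra.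
Qed.

Lemma sumR_split n f i : (i < n)%nat ->
  sumR n f = sumR n (fun k => if Nat.eqb k i then 0 else f k) + f i.
Proof.
  induction n; intros Hi; [lia|]. simpl.
  destruct (Nat.eq_dec i n) as [->|Hne].
  - rewrite Nat.eqb_refl.
    rewrite (sumR_ext n (fun k => if Nat.eqb k n then 0 else f k) f); [ring|].
    intros k Hk. destruct (Nat.eqb_spec k n); [lia|reflexivity].
  - rewrite IHn by lia. destruct (Nat.eqb_spec n i); [lia|]. ring.
Qed.

Lemma exp_convex q a c : 0 <= q <= 1 ->
  exp (q * a + (1 - q) * c) <= q * exp a + (1 - q) * exp c.
Proof.
  intros Hq. set (m := q * a + (1 - q) * c).
  assert (Ha : exp m * (1 + (a - m)) <= exp a).
  { replace (exp a) with (exp m * exp (a - m)) by (rewrite <- exp_plus; f_equal; ring).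
    apply Rmult_le_compat_l; [left; apply exp_pos|apply exp_ineq1_le]. }
  assert (Hc : exp m * (1 + (c - m)) <= exp c).
  { replace (exp c) with (exp m * exp (c - m)) by (rewrite <- exp_plus; f_equal; ring).
    apply Rmult_le_compat_l; [left; apply exp_pos|apply exp_ineq1_le]. }
  assert (E : exp m = q * (exp m * (1 + (a - m))) + (1 - q) * (exp m * (1 + (c - m))))
    by (unfold m; ring).
  rewrite E at 1. apply Rplus_le_compat; apply Rmult_le_compat_l; lra.
Qed.

Lemma term_key r rho B S y : 0 < r <= 1 -> 0 < rho < 1 -> 0 < B -> 0 < S -> 0 < y ->
  rpow (B * rpow y r) rho =
  exp ((1 - r*rho) * ln S) *
  exp ((r*rho) * ln y + (1 - r*rho) * ln (exp (rho / (1 - r*rho) * ln B) / S)).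
Proof.
  intros Hr Hrho HB HS Hy.
  assert (0 < r * rho) by nra. assert (r*rho < 1) by nra.
  rewrite (rpow_pos y) by lra.
  rewrite rpow_pos by (apply Rmult_lt_0_compat; [lra|apply exp_pos]).
  rewrite ln_mult by (try lra; apply exp_pos). rewrite ln_exp.
  rewrite ln_div by (try lra; apply exp_pos). rewrite ln_exp.
  rewrite <- exp_plus. f_equal. field. lra.
Qed.

Lemma term_le r rho B S y : 0 < r <= 1 -> 0 < rho < 1 -> 0 < B -> 0 < S -> 0 <= y ->
  rpow (B * rpow y r) rho <=
  exp ((1 - r*rho) * ln S) * (r*rho * y + (1 - r*rho) * (rpow B (rho / (1 - r*rho)) / S)).
Proof.
  intros Hr Hrho HB HS Hy.
  assert (0 < r * rho) by nra. assert (r*rho < 1) by nra.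
  rewrite (rpow_pos B) by lra.
  assert (Hx: 0 < exp (rho / (1 - r * rho) * ln B) / S) by (apply Rdiv_lt_0_compat; [apply exp_pos|lra]).
  destruct Hy as [Hy|Hy].
  - rewrite (term_key r rho B S) by lra. apply Rmult_le_compat_l; [left; apply exp_pos|].
    rewrite <- (exp_ln y) at 2 by lra.
    rewrite <- (exp_ln (exp (rho / (1 - r * rho) * ln B) / S)) at 2 by lra.
    apply exp_convex; lra.
  - subst y. rewrite (rpow_nonpos 0) by lra. rewrite Rmult_0_r, rpow_nonpos by lra.
    apply Rmult_le_pos; [left; apply exp_pos|]. nra.
Qed.

Lemma term_eq r rho B S : 0 < r <= 1 -> 0 < rho < 1 -> 0 < B -> 0 < S ->
  rpow (B * rpow (rpow B (rho / (1 - r*rho)) / S) r) rho =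
  exp ((1 - r*rho) * ln S) * (rpow B (rho / (1 - r*rho)) / S).
Proof.
  intros Hr Hrho HB HS.
  rewrite (rpow_pos B) by lra.
  assert (Hx: 0 < exp (rho / (1 - r * rho) * ln B) / S) by (apply Rdiv_lt_0_compat; [apply exp_pos|lra]).
  rewrite (term_key r rho B S) by lra. f_equal.
  rewrite <- (exp_ln (exp (rho / (1 - r * rho) * ln B) / S)) at 3 by lra.
  f_equal. ring.
Qed.

Lemma partA n r rho : 0 < r <= 1 -> 0 < rho < 1 ->
  forall b : nat -> R, (forall k, (k < n)%nat -> 0 < b k) ->
     in_Psi n (fun i x => b i * rpow x r) rho (alloc n (rho / (1 - r * rho)) b).
Proof.
  intros Hr Hrho b Hb.
  assert (0 < r * rho) by nra. assert (r*rho < 1) by nra.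
  unfold in_Psi, feasible, rho_welfare, alloc.
  set (al := rho / (1 - r * rho)).
  set (S := sumR n (fun k => rpow (b k) al)).
  destruct n as [|n'].
  - simpl. split; [split; [intros; lia|lra]|]. intros; lra.
  - set (n := Datatypes.S n') in *.
    assert (HS : 0 < S).
    { apply Rlt_le_trans with (rpow (b 0%nat) al).
      - apply rpow_gt0, Hb; lia.
      - apply (sumR_ge_term n (fun k => rpow (b k) al) 0); [intros; apply rpow_ge0|lia]. }
    assert (Hsum : sumR n (fun i => rpow (b i) al / S) = 1).
    { rewrite sumR_div. fold S. field. lra. }
    split.
    + split; [|lra]. intros i Hi. apply Rdiv_le_0_compat; [apply rpow_ge0|lra].
    + intros y [Hy0 Hy1]. apply rpow_le; [apply Rdiv_lt_0_compat; lra|].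
      set (M := exp ((1 - r*rho) * ln S)).
      assert (HM : 0 < M) by apply exp_pos.
      apply Rle_trans with (sumR n (fun k => (M * (r*rho)) * y k + (M*(1-r*rho)) * (rpow (b k) al / S))).
      { apply sumR_le. intros k Hk.
        replace (M * (r * rho) * y k + M * (1 - r * rho) * (rpow (b k) al / S))
          with (M * (r * rho * y k + (1 - r * rho) * (rpow (b k) al / S))) by ring.
        unfold M, al.
        apply term_le; try lra; [apply Hb; exact Hk|apply Hy0; exact Hk]. }
      rewrite sumR_lin, Hsum.
      rewrite (sumR_ext n (fun i => rpow (b i * rpow (rpow (b i) al / S) r) rho) (fun k => M * (rpow (b k) al / S) + 0 * (rpow (b k) al / S))).
      2:{ intros k Hk. cbv beta. unfold M, al. rewrite (term_eq r rho (b k) S); [ring|lra|lra|apply Hb; exact Hk|lra]. }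
      rewrite sumR_lin, Hsum. assert (M * (r*rho) * sumR n y <= M * (r*rho) * 1) by (apply Rmult_le_compat_l; [nra|lra]). lra.
Qed.

Definition Gf r al A s := exp (r*al*ln s) / exp (r * ln (exp (al * ln s) + A)).
Definition ff r al A t := rpow t (r*al) / rpow (rpow t al + A) (r+1).

Lemma ff_pos r al A t : 0 < A -> 0 < t ->
  ff r al A t = exp (r*al*ln t) / exp ((r+1)*ln(exp (al*ln t) + A)).
Proof.
  intros HA Ht. unfold ff. rewrite (rpow_pos t al) by lra.
  rewrite rpow_pos by lra. rewrite rpow_pos by (pose proof (exp_pos (al * ln t)); lra).
  reflexivity.
Qed.

Lemma Gf_derive r al A s : 0 < A -> 0 < s ->
  is_derive (Gf r al A) s (r*al*A * ff r al A s / s).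
Proof.
  intros HA Hs. rewrite ff_pos by lra. unfold Gf.
  pose proof (exp_pos (al * ln s)).
  auto_derive.
  - repeat split; try lra.
    apply Rgt_not_eq, exp_pos.
  - set (P := exp (al * ln s)) in *.
    replace ((r + 1) * ln (P + A)) with (r * ln (P + A) + ln (P + A)) by ring.
    rewrite exp_plus, exp_ln by lra.
    pose proof (exp_pos (r * ln (P + A))).
    field. repeat split; lra.
Qed.

Lemma ff_cont_pos r al A t : 0 < A -> 0 < t -> continuous (ff r al A) t.
Proof.
  intros HA Ht.
  apply continuous_ext_loc with
    (fun t => exp (r*al*ln t) / exp ((r+1)*ln(exp (al*ln t) + A))).
  - apply locally_interval with (a := Finite 0) (b := p_infty); simpl; try exact Ht; try exact I.
    intros y Hy _. symmetry; apply ff_pos; lra.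
  - apply (ex_derive_continuous (K:=R_AbsRing) (V:=R_NormedModule)). pose proof (exp_pos (al * ln t)).
    auto_derive. repeat split; try lra. apply Rgt_not_eq, exp_pos.
Qed.

Lemma ff_cont0 r al A : 0 < A -> 0 < r -> 0 < r * al -> 0 < al -> continuous (ff r al A) 0.
Proof.
  intros HA Hr Hra Hal.
  assert (H0 : ff r al A 0 = 0).
  { unfold ff. rewrite (rpow_nonpos 0) by lra. unfold Rdiv; ring. }
  unfold continuous. rewrite H0. apply filterlim_locally. intros eps.
  set (K := exp ((r+1) * ln A)).
  assert (HK : 0 < K) by apply exp_pos.
  assert (HeK : 0 < eps * K) by (apply Rmult_lt_0_compat; [apply cond_pos|exact HK]).
  set (d := exp (ln (eps * K) / (r*al))).
  apply locally_interval with (a := Finite (-1)) (b := Finite d); simpl.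
  - lra.
  - apply exp_pos.
  - intros y Hy1 Hy2. change (Rabs (ff r al A y - 0) < eps).
    destruct (Rle_lt_dec y 0) as [Hy|Hy].
    + unfold ff. rewrite (rpow_nonpos y) by lra. unfold Rdiv. rewrite Rmult_0_l, Rminus_0_r, Rabs_R0.
      apply cond_pos.
    + rewrite ff_pos by lra.
      pose proof (exp_pos (al * ln y)) as HP.
      assert (HE3 : K <= exp ((r + 1) * ln (exp (al * ln y) + A))).
      { unfold K. destruct (Rle_lt_dec (r+1) 0).
        - lra.
        - left. apply exp_increasing. apply Rmult_lt_compat_l; [lra|]. apply ln_increasing; lra. }
      assert (HE1 : exp (r * al * ln y) < eps * K).
      { rewrite <- (exp_ln (eps * K)) by exact HeK. apply exp_increasing.
        assert (ln y < ln d) by (apply ln_increasing; lra).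
        unfold d in H. rewrite ln_exp in H.
        apply Rmult_lt_reg_r with (/ (r*al)). apply Rinv_0_lt_compat; lra.
        replace (r * al * ln y * / (r * al)) with (ln y) by (field; split; intro; subst; lra). exact H. }
      pose proof (exp_pos (r * al * ln y)).
      rewrite Rminus_0_r, Rabs_pos_eq by (left; apply Rdiv_lt_0_compat; [lra|apply exp_pos]).
      apply Rle_lt_trans with (exp (r * al * ln y) / K).
      * unfold Rdiv. apply Rmult_le_compat_l; [lra|]. apply Rinv_le_contravar; lra.
      * apply Rmult_lt_reg_r with K; [exact HK|]. unfold Rdiv. rewrite Rmult_assoc, Rinv_l by lra. lra.
Qed.

Lemma ff_gt0 r al A t : 0 < A -> 0 < t -> 0 < ff r al A t.
Proof. intros HA Ht. rewrite ff_pos by lra. apply Rdiv_lt_0_compat; apply exp_pos. Qed.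

Lemma ex_RInt_ff r al A s : 0 < A -> 0 < r -> 0 < al -> 0 <= s -> ex_RInt (ff r al A) 0 s.
Proof.
  intros HA Hr Hal Hs. apply (ex_RInt_continuous (V:=R_CompleteNormedModule)).
  rewrite Rmin_left, Rmax_right by lra. intros z [Hz1 Hz2].
  destruct Hz1 as [Hz|Hz].
  - apply ff_cont_pos; lra.
  - subst z. apply ff_cont0; try lra. nra.
Qed.

Definition Phi r al A w s := w * Gf r al A s - r*al*A * RInt (ff r al A) 0 s.

Lemma Phi_derive r al A w s : 0 < A -> 0 < r -> 0 < al -> 0 < s ->
  is_derive (Phi r al A w) s ((w - s) * (r*al*A * ff r al A s / s)).
Proof.
  intros HA Hr Hal Hs.
  assert (H1 := Gf_derive r al A s HA Hs).
  assert (H2 : is_derive (fun s => RInt (ff r al A) 0 s) s (ff r al A s)).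
  { apply (is_derive_RInt (V:=R_NormedModule) (ff r al A) (fun s => RInt (ff r al A) 0 s) 0 s).
    - apply locally_interval with (a := Finite 0) (b := p_infty); simpl; try exact Hs; try exact I.
      intros y Hy _. apply (RInt_correct (V:=R_CompleteNormedModule)), ex_RInt_ff; lra.
    - apply ff_cont_pos; lra. }
  apply (is_derive_scal _ _ w) in H1.
  apply (is_derive_scal _ _ (r*al*A)) in H2.
  assert (H3 := is_derive_minus _ _ _ _ _ H1 H2).
  replace ((w - s) * (r * al * A * ff r al A s / s))
    with (minus (w * (r * al * A * ff r al A s / s)) (r * al * A * ff r al A s)).
  - apply (is_derive_ext _ _ _ _ (fun t => eq_refl)) in H3. exact H3.
  - unfold minus, plus, opp; simpl. field. lra.
Qed.

Lemma Phi_mvt r al A w a b : 0 < A -> 0 < r -> 0 < al -> 0 < a -> a <= b ->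
  exists c, a <= c <= b /\
    Phi r al A w b - Phi r al A w a = (w - c) * (r*al*A * ff r al A c / c) * (b - a).
Proof.
  intros HA Hr Hal Ha Hab.
  destruct (MVT_gen (Phi r al A w) a b (fun s => (w - s) * (r*al*A * ff r al A s / s))) as [c [Hc E]].
  - intros x Hx. rewrite Rmin_left, Rmax_right in Hx by lra. apply Phi_derive; lra.
  - intros x Hx. rewrite Rmin_left, Rmax_right in Hx by lra.
    apply continuity_pt_filterlim.
    apply (ex_derive_continuous (K:=R_AbsRing) (V:=R_NormedModule)).
    eexists. apply Phi_derive; lra.
  - rewrite Rmin_left, Rmax_right in Hc by lra. exists c. split; [exact Hc|exact E].
Qed.

Lemma Phi_strict r al A w u : 0 < A -> 0 < r -> 0 < al -> 0 < w -> 0 < u -> u <> w ->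
  Phi r al A w u < Phi r al A w w.
Proof.
  intros HA Hr Hal Hw Hu Hne.
  assert (Hpos : forall c, 0 < c -> 0 < r*al*A * ff r al A c / c).
  { intros c Hc. apply Rdiv_lt_0_compat; [|lra].
    apply Rmult_lt_0_compat; [apply Rmult_lt_0_compat; [nra|lra]|apply ff_gt0; lra]. }
  set (m := (u + w) / 2).
  destruct (Rlt_dec u w) as [Hlt|Hge].
  - destruct (Phi_mvt r al A w u m) as [c0 [Hc0 E0]]; try lra; unfold m; try lra.
    destruct (Phi_mvt r al A w m w) as [c1 [Hc1 E1]]; try lra; unfold m in *; try lra.
    assert (P0 := Hpos c0 ltac:(lra)). assert (P1 := Hpos c1 ltac:(lra)).
    assert (0 < (w - c0) * (r * al * A * ff r al A c0 / c0) * ((u + w) / 2 - u)).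
    { apply Rmult_lt_0_compat; [apply Rmult_lt_0_compat|]; lra. }
    assert (0 <= (w - c1) * (r * al * A * ff r al A c1 / c1) * (w - (u + w) / 2)).
    { apply Rmult_le_pos; [apply Rmult_le_pos|]; lra. }
    lra.
  - assert (w < u) by lra.
    destruct (Phi_mvt r al A w w m) as [c1 [Hc1 E1]]; try lra; unfold m; try lra.
    destruct (Phi_mvt r al A w m u) as [c0 [Hc0 E0]]; try lra; unfold m in *; try lra.
    assert (P0 := Hpos c0 ltac:(lra)). assert (P1 := Hpos c1 ltac:(lra)).
    assert (0 < (c0 - w) * (r * al * A * ff r al A c0 / c0) * (u - (u + w) / 2)).
    { apply Rmult_lt_0_compat; [apply Rmult_lt_0_compat|]; lra. }
    assert (0 <= (c1 - w) * (r * al * A * ff r al A c1 / c1) * ((u + w) / 2 - w)).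
    { apply Rmult_le_pos; [apply Rmult_le_pos|]; lra. }
    assert (E0' : Phi r al A w u - Phi r al A w ((u + w) / 2) =
       - ((c0 - w) * (r * al * A * ff r al A c0 / c0) * (u - (u + w) / 2))) by (rewrite E0; ring).
    assert (E1' : Phi r al A w ((u + w) / 2) - Phi r al A w w =
       - ((c1 - w) * (r * al * A * ff r al A c1 / c1) * ((u + w) / 2 - w))) by (rewrite E1; ring).
    lra.
Qed.

Lemma upd_same b i s : upd b i s i = s.
Proof. unfold upd. rewrite Nat.eqb_refl. reflexivity. Qed.

Lemma others_upd n al b i s : others n al (upd b i s) i = others n al b i.
Proof.
  unfold others. apply sumR_ext. intros k _. unfold upd.
  destruct (Nat.eqb k i); reflexivity.
Qed.

Lemma others_ge0 n al b i : 0 <= others n al b i.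
Proof.
  unfold others. apply sumR_ge0. intros k _. destruct (Nat.eqb k i); [lra|apply rpow_ge0].
Qed.

Lemma alloc_upd n al b i s : (i < n)%nat ->
  alloc n al (upd b i s) i = rpow s al / (others n al b i + rpow s al).
Proof.
  intros Hi. unfold alloc. rewrite upd_same. f_equal.
  rewrite (sumR_split n _ i Hi). rewrite upd_same. f_equal.
  rewrite <- (others_upd n al b i s). reflexivity.
Qed.

Lemma utility_eq n r al w b i s : (i < n)%nat -> 0 < s -> 0 < others n al b i ->
  utility n r al w (upd b i s) i = Phi r al (others n al b i) w s.
Proof.
  intros Hi Hs HA. unfold utility, Phi, pay. rewrite alloc_upd by exact Hi.
  rewrite others_upd, upd_same. set (A := others n al b i) in *.
  f_equal. f_equal.
  rewrite (rpow_pos s al) by lra. pose proof (exp_pos (al * ln s)) as HP.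
  rewrite rpow_pos by (apply Rdiv_lt_0_compat; lra).
  rewrite ln_div by lra. rewrite ln_exp. unfold Gf.
  rewrite (Rplus_comm A (exp (al * ln s))).
  replace (r * (al * ln s - ln (exp (al * ln s) + A)))
    with (r * al * ln s + - (r * ln (exp (al * ln s) + A))) by ring.
  rewrite exp_plus, exp_Ropp. reflexivity.
Qed.

Lemma utility_eq0 n r al w b i s : (i < n)%nat -> 0 < s -> others n al b i = 0 ->
  utility n r al w (upd b i s) i = w.
Proof.
  intros Hi Hs HA. unfold utility, pay. rewrite alloc_upd by exact Hi.
  rewrite others_upd, HA. rewrite Rplus_0_l.
  rewrite Rdiv_diag by (apply Rgt_not_eq, rpow_gt0; lra).
  rewrite rpow_pos by lra. rewrite ln_1, Rmult_0_r, exp_0. ring.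
Qed.

Lemma others_pos n al b i : (2 <= n)%nat -> (i < n)%nat -> (forall k, (k < n)%nat -> 0 < b k) ->
  0 < others n al b i.
Proof.
  intros H2 Hi Hb. set (j := if Nat.eqb i 0 then 1%nat else 0%nat).
  assert (Hj : (j < n)%nat /\ Nat.eqb j i = false).
  { unfold j. destruct (Nat.eqb_spec i 0); split; try lia; apply Nat.eqb_neq; lia. }
  destruct Hj as [Hj Hji].
  apply Rlt_le_trans with (rpow (b j) al).
  - apply rpow_gt0, Hb, Hj.
  - unfold others.
    assert (E : rpow (b j) al = (fun k => if Nat.eqb k i then 0 else rpow (b k) al) j)
      by (simpl; rewrite Hji; reflexivity).
    rewrite E. apply (sumR_ge_term n (fun k => if Nat.eqb k i then 0 else rpow (b k) al) j); [|exact Hj].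
    intros k _. destruct (Nat.eqb k i); [lra|apply rpow_ge0].
Qed.

Theorem mainTheorem6 (n : nat) (r rho : R) :
  0 < r <= 1 -> 0 < rho < 1 ->
  let alpha := rho / (1 - r * rho) in
  (forall b : nat -> R, (forall k, (k < n)%nat -> 0 < b k) ->
     in_Psi n (fun i x => b i * rpow x r) rho (alloc n alpha b)) /\
  (forall (i : nat) (w : R) (b : nat -> R),
     (i < n)%nat -> 0 < w -> (forall k, (k < n)%nat -> 0 < b k) ->
     forall bi : R, 0 < bi ->
       utility n r alpha w (upd b i bi) i <= utility n r alpha w (upd b i w) i) /\
  ((2 <= n)%nat ->
   forall (i : nat) (w : R) (b : nat -> R),
     (i < n)%nat -> 0 < w -> (forall k, (k < n)%nat -> 0 < b k) ->
     forall bi : R, 0 < bi -> bi <> w ->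
       utility n r alpha w (upd b i bi) i < utility n r alpha w (upd b i w) i).
Proof.
  intros Hr Hrho alpha.
  assert (Hal : 0 < alpha).
  { unfold alpha. apply Rdiv_lt_0_compat; nra. }
  split; [apply partA; assumption|]. split.
  - intros i w b Hi Hw Hb bi Hbi.
    destruct (others_ge0 n alpha b i) as [HA|HA].
    + rewrite !utility_eq by assumption.
      destruct (Req_dec bi w) as [->|Hne]; [lra|].
      left; apply Phi_strict; lra.
    + rewrite !utility_eq0 by (auto; lra). lra.
  - intros H2 i w b Hi Hw Hb bi Hbi Hne.
    assert (HA := others_pos n alpha b i H2 Hi Hb).
    rewrite !utility_eq by assumption. apply Phi_strict; lra.
Qed.
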